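(* For integers $m\ge1$ and $k\ge0$, $$\mu(N|_m,k,J)\equiv\begin{cases}1\pmod 2,&\text{if }k=0,\\ 0\pmod 2,&\text{if }k\ge1.\end{cases}$$
   Context: Let $N=\{0,1,2,\ldots\}$ and $J=\{(2n+1)2^{2k}-1 : n,k\in N\}=\{0,2,3,4,6,8,10,11,\ldots\}$. For an infinite set $A\subseteq N$, $A|_m$ denotes the set of the $m$ smallest elements of $A$. An involution on a finite set $A$ is a permutation $\sigma$ of $A$ with $\sigma=\sigma^{-1}$; its cycles are fixed points and transpositions $(c,d)$. A transposition $(c,d)$ is said to be in a set $B$ if $c+d\in B$. For a finite set $A\subseteq N$, an integer $k\ge0$ and a set $B\subseteq N$, $\mu(A,k,B)$ denotes the number of involutions of $A$ having exactly $k$ transpositions, all of which are in $B$. *)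

(* Defs.v *)
From mathcomp Require Import all_boot all_fingroup.
Set Implicit Arguments. Unset Strict Implicit. Unset Printing Implicit Defensive.

(* J = {(2n+1) 2^(2k) - 1 : n, k in N}.  Membership as a boolean; the witnesses
   n, k are bounded by x+1, which loses nothing since (2n+1)2^(2k) - 1 >= n, k. *)
Definition inJ (x : nat) : bool :=
  [exists n : 'I_(x.+2), exists k : 'I_(x.+2),
     x == (2 * n + 1) * 2 ^ (2 * k) - 1].

(* N|_m = {0, ..., m-1}, represented by 'I_m (the element i : 'I_m is the
   natural number i).  An involution of N|_m is a permutation s with s*s = 1.
   Its transpositions are the 2-cycles (c, s c) with c <> s c; each is counted
   once via its smaller element c < s c.  A transposition (c,d) is in B iff
   c + d \in B. *)
Definition involution m (s : {perm 'I_m}) : bool := (s * s == 1)%g.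

Definition num_transp m (s : {perm 'I_m}) : nat := #|[set c : 'I_m | c < s c]|.

Definition transp_in m (B : nat -> bool) (s : {perm 'I_m}) : bool :=
  [forall c : 'I_m, (s c != c) ==> B (c + s c)].

Definition mu (m k : nat) (B : nat -> bool) : nat :=
  #|[set s : {perm 'I_m} | [&& involution s, num_transp s == k & transp_in B s]]|.

(* Main.v *)
Require Import Defs.
From mathcomp Require Import all_boot all_fingroup.
From mathcomp Require Import all_algebra.
Set Implicit Arguments. Unset Strict Implicit. Unset Printing Implicit Defensive.
From mathcomp Require Import zify.
Import GRing.Theory.

Lemma inJE x : inJ x = ~~ odd (logn 2 x.+1).
Proof.
apply/idP/idP.
  case/existsP=> n /existsP [k /eqP ->].
  have h : 0 < (2 * n + 1) * 2 ^ (2 * k) by rewrite muln_gt0 expn_gt0 /=; lia.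
  rewrite subn1 prednK // logn_Gauss ?coprime2n; last by rewrite addn1 /= oddM.
  by rewrite pfactorK // oddM.
move=> he.
have [r cr hx] := pfactor_coprime (isT : prime 2) (ltn0Sn x).
move: cr; rewrite coprime2n => oddr.
set e := logn 2 x.+1 in hx he.
have ee : e = (e./2).*2 by move: (odd_double_half e); rewrite (negbTE he).
have hr : r = 2 * r./2 + 1 by move: (odd_double_half r); rewrite oddr; lia.
have le : 2 ^ e <= x.+1 by rewrite hx leq_pmull // lt0n; apply/eqP=> r0; rewrite r0 in oddr.
have lte : e < x.+1 := leq_trans (ltn_expl e (isT : 1 < 2)) le.
have lrr : r <= x.+1 by rewrite hx leq_pmulr // expn_gt0.
have l1 : r./2 < x.+2 by lia.
have l2 : e./2 < x.+2 by lia.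
apply/existsP; exists (Ordinal l1).
apply/existsP; exists (Ordinal l2).
apply/eqP => /=.
by rewrite -hr mul2n -ee -hx subn1.
Qed.

Lemma inJ_even x : inJ (2 * x).
Proof.
rewrite inJE logn_coprime // coprime2n.
by rewrite -addn1 oddD oddM.
Qed.

Lemma inJ_odd x : inJ (2 * x + 1) = ~~ inJ x.
Proof.
rewrite !inJE addn1 -(addn1 (2 * x)) -addnS -mulnSr.
by rewrite lognM // (pfactorK 1 (isT : prime 2)) oddD /=.
Qed.

Local Open Scope ring_scope.

Notation R := {poly 'F_2}.

Lemma two0 : (2%:R : R) = 0.
Proof. by rewrite -polyC_natr (_ : (2%:R : 'F_2) = 0) ?raddf0 //; apply/eqP. Qed.

Lemma char2 (x : R) : x + x = 0.
Proof. by rewrite -mulr2n -mulr_natr two0 mulr0. Qed.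

Lemma oppR (x : R) : - x = x.
Proof. by apply/eqP; rewrite -subr_eq0 -opprD char2 oppr0. Qed.

Lemma subR (x y : R) : x - y = x + y.
Proof. by rewrite oppR. Qed.

Definition ent (c d : nat) : R := if c == d then 'X else (inJ (c + d))%:R.

Definition Mf p (G : nat -> nat -> R) : 'M[R]_p := \matrix_(i, j) G i j.

Lemma reindex_det p (G : nat -> nat -> R) (f : 'I_p -> nat) :
  injective f -> (forall i, (f i < p)%N) ->
  \det (\matrix_(i, j) G (f i) (f j)) = \det (Mf p G).
Proof.
move=> finj flt.
pose h i := Ordinal (flt i).
have hinj : injective h by move=> i j /(congr1 val) /= /finj.
pose s := perm hinj.
have -> : \matrix_(i, j) G (f i) (f j) = row_perm s (col_perm s (Mf p G)).
  by apply/matrixP=> i j; rewrite !mxE !permE.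
rewrite row_permE col_permE !det_mulmx !det_perm odd_permV.
have m1 : (-1 : R) = 1 by rewrite oppR.
by rewrite m1 expr1n mul1r mulr1.
Qed.

Definition delta p := \det (Mf p ent).

Local Open Scope ring_scope.

Lemma ent_sym c d : ent c d = ent d c.
Proof. by rewrite /ent eq_sym addnC. Qed.

Lemma ent_ee a b : ent (2*a)%N (2*b)%N = if a == b then 'X else 1.
Proof.
rewrite /ent eqn_mul2l /= -mulnDr inJ_even.
by case: eqP.
Qed.

Lemma ent_eo a b : ent (2*a)%N (2*b+1)%N = (~~ inJ (a+b)%N)%:R.
Proof.
rewrite /ent ifF; last by apply/eqP; lia.
by rewrite addnA -mulnDr inJ_odd.
Qed.

Lemma ent_oe a b : ent (2*a+1)%N (2*b)%N = (~~ inJ (a+b)%N)%:R.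
Proof. by rewrite ent_sym ent_eo addnC. Qed.

Lemma ent_oo a b : ent (2*a+1)%N (2*b+1)%N = if a == b then 'X else 1.
Proof.
rewrite /ent (_ : (2 * a + 1 == 2 * b + 1) = (a == b)); last by apply/eqP/eqP; lia.
rewrite (_ : (2 * a + 1 + (2 * b + 1) = 2 * (a + b + 1))%N); last by lia.
by rewrite inJ_even.
Qed.

Lemma bool_sum (b : bool) : (1 : R) + (~~ b)%:R = b%:R.
Proof. by case: b => /=; rewrite ?addr0 ?char2. Qed.

Lemma key_id a b : (if a == b then 'X else 1) + (~~ inJ (a+b)%N)%:R = ent a b.
Proof.
rewrite /ent; case: eqP => [<-|_]; last by rewrite bool_sum.
by rewrite addnn -mul2n inJ_even addr0.
Qed.

Definition ev n (i : 'I_(n + n)) : nat :=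
  match split i with inl a => (2 * a)%N | inr b => (2 * b + 1)%N end.

Lemma ev_inj n : injective (@ev n).
Proof.
move=> i j; rewrite /ev.
case: splitP => a ia; case: splitP => b jb => e; apply/val_inj => /=;
  have := ltn_ord a; have := ltn_ord b; lia.
Qed.

Lemma ev_lt n (i : 'I_(n + n)) : (ev i < n + n)%N.
Proof. rewrite /ev; case: splitP => a _; have := ltn_ord a; lia. Qed.

Local Open Scope ring_scope.

Lemma delta_even n : delta (n + n) = delta n * delta n.
Proof.
rewrite /delta -(reindex_det ent (@ev_inj n) (@ev_lt n)).
set M := \matrix_(i, j) ent (ev i) (ev j).
pose A : 'M[R]_n := \matrix_(i, j) ent (2*i)%N (2*j)%N.
pose B : 'M[R]_n := \matrix_(i, j) ent (2*i)%N (2*j+1)%N.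
pose C : 'M[R]_n := \matrix_(i, j) ent (2*i+1)%N (2*j)%N.
pose D : 'M[R]_n := \matrix_(i, j) ent (2*i+1)%N (2*j+1)%N.
have eM : M = block_mx A B C D.
  apply/matrixP=> i j; rewrite !mxE /ev; case: (split i) => a; rewrite mxE;
  case: (split j) => b; by rewrite mxE.
pose T : 'M[R]_(n + n) := block_mx 1%:M 0 1%:M 1%:M.
have dT : \det T = 1 by rewrite det_lblock !det1 mulr1.
have <- : \det (T *m M *m T) = \det M by rewrite !det_mulmx dT mul1r mulr1.
rewrite eM !mulmx_block !mul1mx !mul0mx !mulmx1 !mulmx0 !addr0 !add0r.
have e1 : A + B = Mf n ent.
  by apply/matrixP=> i j; rewrite !mxE ent_ee ent_eo key_id.
have e2 : B + D = Mf n ent.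
  by apply/matrixP=> i j; rewrite !mxE ent_oo ent_eo addrC key_id.
have e3 : A + C + (B + D) = 0.
  apply/matrixP=> i j; rewrite !mxE ent_ee ent_eo ent_oe ent_oo.
  by rewrite [X in _ + X]addrC char2.
by rewrite e3 e1 e2 det_ublock.
Qed.

Local Open Scope ring_scope.

Lemma bord p (B : 'M[R]_p) (v : 'cV_p) (u : 'rV_p) (d : R) : \det B != 0 ->
  \det (block_mx B v u d%:M) = d * \det B - (u *m \adj B *m v) 0 0.
Proof.
move=> nz.
pose w := \adj B *m v.
pose Q : 'M[R]_(p + 1) := block_mx 1%:M (- w) 0 (\det B)%:M.
have dQ : \det Q = \det B by rewrite det_ublock det1 det_scalar1 mul1r.
have e : block_mx B v u d%:M *m Q = block_mx B 0 u (d * \det B - (u *m w) 0 0)%:M.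
  rewrite mulmx_block !mulmx1 !mulmx0 !addr0.
  congr block_mx.
  - rewrite (mulmxN B w) /w mulmxA mul_mx_adj mul_scalar_mx mul_mx_scalar.
    by rewrite addrC subrr.
  - rewrite mulmxN -scalar_mxM /w.
    apply/matrixP=> i j; rewrite !(ord1 i) !(ord1 j).
    rewrite !mxE /= mulr1n addrC.
    by rewrite mulrC.
have := congr1 determinant e.
rewrite det_mulmx dQ det_lblock det_scalar1 => h.
apply: (mulIf nz); rewrite h mulrC; congr (_ * _).
by rewrite /w mulmxA.
Qed.

Definition lastf m (i : 'I_(m + 1)) : nat :=
  match split i with inl a => val a | inr _ => m end.

Lemma lastf_inj m : injective (@lastf m).
Proof.
move=> i j; rewrite /lastf.
case: splitP => a ia; case: splitP => b jb => /= e; apply: val_inj => /=;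
  have := ltn_ord a; have := ltn_ord b; lia.
Qed.

Lemma lastf_lt m (i : 'I_(m + 1)) : (lastf i < m + 1)%N.
Proof. rewrite /lastf; case: splitP => a _ /=; have := ltn_ord a; try lia.
Qed.

Lemma border_det m (G : nat -> nat -> R) :
  \det (Mf m.+1 G) =
  \det (block_mx (Mf m G) (\col_i G i m) (\row_j G m j) (G m m)%:M).
Proof.
have -> : \det (Mf m.+1 G) = \det (Mf (m + 1) G) by rewrite addn1.
rewrite -(reindex_det G (@lastf_inj m) (@lastf_lt m)).
congr determinant; apply/matrixP=> i j; rewrite !mxE /lastf.
case: (split i) => a; rewrite mxE; case: (split j) => b; rewrite !mxE //=.
by rewrite (ord1 a) (ord1 b) eqxx mulr1n.
Qed.

Lemma sym_sum p (F : 'I_p -> 'I_p -> R) : (forall i j, F i j = F j i) ->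
  \sum_i \sum_j F i j = \sum_i F i i.
Proof.
move=> Fs.
have e : forall i j, F i j = (if i == j then F i i else 0)
    + ((if (j < i)%N then F i j else 0) + (if (i < j)%N then F i j else 0)).
  move=> i j; case: (ltngtP i j) => h.
  - have -> : (i == j) = false by apply/eqP => ij; move: h; rewrite ij ltnn.
    by rewrite ?add0r ?addr0.
  - have -> : (i == j) = false by apply/eqP => ij; move: h; rewrite ij ltnn.
    by rewrite ?add0r ?addr0.
  - have ij : i = j by apply/val_inj.
    by rewrite ij eqxx ?addr0.
under eq_bigr do under eq_bigr do rewrite e.
rewrite (eq_bigr (fun i => F i i + (\sum_(j : 'I_p) (if (j < i)%N then F i j else 0)
   + \sum_(j : 'I_p) (if (i < j)%N then F i j else 0)))); last first.
  move=> i _; rewrite big_split /= big_split /=; congr (_ + _).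
  rewrite (bigD1 i) //= eqxx big1 ?addr0 // => j /negbTE; by rewrite eq_sym => ->.
rewrite big_split /= big_split /=.
rewrite [X in _ + (_ + X)]exchange_big /=.
have -> : \sum_(j : 'I_p) \sum_(i : 'I_p) (if (i < j)%N then F i j else 0)
  = \sum_(i : 'I_p) \sum_(j : 'I_p) (if (j < i)%N then F i j else 0).
  by apply: eq_bigr => i _; apply: eq_bigr => j _; rewrite Fs.
by rewrite char2 addr0.
Qed.

Lemma key2 m (v : 'cV[R]_m) :
  \det (Mf m ent) * (\sum_i v i 0 * (\adj (Mf m ent) *m v) i 0)
  = 'X * (\sum_i (\adj (Mf m ent) *m v) i 0) ^+ 2.
Proof.
set B := Mf m ent; set w := \adj B *m v.
have Bw : B *m w = \det B *: v by rewrite /w mulmxA mul_mx_adj mul_scalar_mx.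
have h : forall i, \det B * v i 0 = \sum_j B i j * w j 0.
  by move=> i; have := congr1 (fun M : 'M[R]_(m,1) => M i 0) Bw; rewrite !mxE => <-.
rewrite mulr_sumr.
under eq_bigr => i _ do rewrite mulrA h mulr_suml.
rewrite (sym_sum (F := fun i j => B i j * w j 0 * w i 0)); last first.
  by move=> i j; rewrite /B !mxE ent_sym mulrAC.
rewrite expr2 mulr_suml.
under [X in _ = _ * X]eq_bigr => i _ do rewrite mulr_sumr.
rewrite (sym_sum (F := fun i j => w i 0 * w j 0)); last by move=> i j; rewrite mulrC.
rewrite mulr_sumr; apply: eq_bigr => i _.
by rewrite /B mxE /ent eqxx mulrA.
Qed.

Definition Gb m (u : nat -> R) (c d : nat) : R :=
  if (c < m)%N && (d < m)%N then ent c d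
  else if (c < m)%N then ent c m
  else if (d < m)%N then u d else 0.

Definition Dm m u := \det (Mf m.+1 (Gb m u)).

Lemma Gb_in m u c d : (c < m)%N -> (d < m)%N -> Gb m u c d = ent c d.
Proof. by rewrite /Gb => -> ->. Qed.
Lemma Gb_col m u c : (c < m)%N -> Gb m u c m = ent c m.
Proof. by rewrite /Gb ltnn andbF => ->. Qed.
Lemma Gb_row m u d : (d < m)%N -> Gb m u m d = u d.
Proof. by rewrite /Gb ltnn /= => ->. Qed.
Lemma Gb_corner m u : Gb m u m m = 0.
Proof. by rewrite /Gb ltnn. Qed.

Lemma Dm_formula m u : delta m != 0 ->
  Dm m u = - (\row_j u j *m \adj (Mf m ent) *m \col_i ent i m) 0 0.
Proof.
move=> nz; rewrite /Dm border_det.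
have e1 : Mf m (Gb m u) = Mf m ent.
  by apply/matrixP=> i j; rewrite !mxE Gb_in.
have e2 : (\col_i Gb m u i m : 'cV[R]_m) = \col_i ent i m.
  by apply/matrixP=> i j; rewrite !mxE Gb_col.
have e3 : (\row_j Gb m u m j : 'rV[R]_m) = \row_j u j.
  by apply/matrixP=> i j; rewrite !mxE Gb_row.
by rewrite e1 e2 e3 Gb_corner bord // mul0r sub0r.
Qed.

Lemma delta_succ m : delta m != 0 ->
  delta m.+1 = 'X * delta m + Dm m (fun d => ent m d).
Proof.
move=> nz; rewrite Dm_formula // {1}/delta border_det bord //.
by rewrite /ent eqxx.
Qed.

Local Open Scope ring_scope.

Lemma key3 m : delta m != 0 ->
  delta m * Dm m (fun d => ent m d) = 'X * (Dm m (fun _ => 1)) ^+ 2.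
Proof.
move=> nz; rewrite !Dm_formula // !oppR -!mulmxA !mxE.
have := @key2 m (\col_i ent i m).
rewrite -/(delta m).
set w := \adj (Mf m ent) *m \col_i ent i m.
have e1 : \sum_j (\row_j0 ent m j0 : 'rV[R]_m) 0 j * w j 0
   = \sum_i (\col_i0 ent i0 m : 'cV[R]_m) i 0 * w i 0.
  by apply: eq_bigr => i _; rewrite !mxE ent_sym.
have e2 : \sum_j (\row_j0 1 : 'rV[R]_m) 0 j * w j 0 = \sum_i w i 0.
  by apply: eq_bigr => i _; rewrite !mxE mul1r.
by rewrite e1 e2.
Qed.

Definition od n (b : 'I_n.+1) : nat := if (b < n)%N then (2 * b + 1)%N else (n + n)%N.

Definition evb n (i : 'I_(n + n.+1)) : nat :=
  match split i with inl a => (2 * a)%N | inr b => od b end.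

Lemma evb_inj n : injective (@evb n).
Proof.
move=> i j; rewrite /evb /od.
case: splitP => a ia; case: splitP => b jb /=;
  have := ltn_ord a; have := ltn_ord b;
  repeat case: ifP; move=> *; apply: val_inj => /=; lia.
Qed.

Lemma evb_lt n (i : 'I_(n + n.+1)) : (evb i < n + n.+1)%N.
Proof. rewrite /evb /od; case: splitP => a _ /=; have := ltn_ord a; try (case: ifP => ?); lia. Qed.

Lemma lift_max_val n (i : 'I_n) : val (lift ord_max i) = val i.
Proof. by rewrite /= /bump leqNgt ltn_ord. Qed.

Lemma od_lift n (i : 'I_n) : od (lift ord_max i) = (2 * i + 1)%N.
Proof. by rewrite /od lift_max_val ltn_ord. Qed.

Lemma od_max n : od (@ord_max n) = (n + n)%N.
Proof. by rewrite /od /= ltnn. Qed.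

Definition Pm n : 'M[R]_(n.+1, n) := \matrix_(i, j) ((i : nat) == j)%:R.

Lemma mulPr r n (X : 'M[R]_(r, n.+1)) i j : (X *m Pm n) i j = X i (lift ord_max j).
Proof.
rewrite !mxE (bigD1 (lift ord_max j)) //= !mxE lift_max_val eqxx mulr1 big1 ?addr0 //.
move=> k nk; rewrite !mxE; case: eqP => [e|]; last by rewrite mulr0.
by case/eqP: nk; apply: val_inj; rewrite lift_max_val.
Qed.

Lemma mulPl_lift c n (X : 'M[R]_(n, c)) i j : (Pm n *m X) (lift ord_max i) j = X i j.
Proof.
rewrite !mxE (bigD1 i) //= !mxE lift_max_val eqxx mul1r big1 ?addr0 //.
move=> k nk; rewrite !mxE lift_max_val; case: eqP => [e|]; last by rewrite mul0r.
by case/eqP: nk; apply: val_inj.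
Qed.

Lemma mulPl_max c n (X : 'M[R]_(n, c)) j : (Pm n *m X) ord_max j = 0.
Proof.
rewrite !mxE big1 // => k _; rewrite !mxE /=.
by rewrite (_ : (n == k) = false) ?mul0r //; apply/negbTE; rewrite neq_ltn ltn_ord orbT.
Qed.

Lemma mxaddE a b (X Y : 'M[R]_(a, b)) i j : (X + Y) i j = X i j + Y i j.
Proof. by rewrite mxE. Qed.

Lemma Dm_even n : Dm (n + n) (fun _ => 1) = delta n * Dm n (fun _ => 1).
Proof.
rewrite /Dm.
have -> : \det (Mf (n + n).+1 (Gb (n + n) (fun _ => 1)))
        = \det (Mf (n + n.+1) (Gb (n + n) (fun _ => 1))) by rewrite addnS.
rewrite -(reindex_det _ (@evb_inj n) (@evb_lt n)).
set G := Gb (n + n) (fun _ => 1).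
pose A : 'M[R]_n := \matrix_(i, j) G (2 * i)%N (2 * j)%N.
pose B : 'M[R]_(n, n.+1) := \matrix_(i, j) G (2 * i)%N (od j).
pose C : 'M[R]_(n.+1, n) := \matrix_(i, j) G (od i) (2 * j)%N.
pose D : 'M[R]_(n.+1) := \matrix_(i, j) G (od i) (od j).
have eM : \matrix_(i, j) G (@evb n i) (@evb n j) = block_mx A B C D.
  apply/matrixP=> i j; rewrite !mxE /evb; case: (split i) => a; rewrite mxE;
  case: (split j) => b; by rewrite mxE.
pose T : 'M[R]_(n + n.+1) := block_mx 1%:M 0 (Pm n) 1%:M.
have dT : \det T = 1 by rewrite det_lblock !det1 mulr1.
have <- : \det (T *m (\matrix_(i, j) G (@evb n i) (@evb n j)) *m T)
          = \det (\matrix_(i, j) G (@evb n i) (@evb n j)).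
  by rewrite !det_mulmx dT mul1r mulr1.
rewrite eM !mulmx_block !mul1mx !mul0mx !mulmx1 !mulmx0 !addr0 !add0r.
have nn : (n + n = 2 * n)%N by lia.
have hGin c d : (c < n + n)%N -> (d < n + n)%N -> G c d = ent c d by apply: Gb_in.
have hGcol c : (c < n + n)%N -> G c (n + n) = ent c (n + n) by apply: Gb_col.
have hGrow d : (d < n + n)%N -> G (n + n) d = 1 by move=> h; rewrite /G Gb_row.
have hGcor : G (n + n) (n + n) = 0 by rewrite /G Gb_corner.
have e1 : A + B *m Pm n = Mf n ent.
  apply/matrixP=> i j; rewrite mxaddE mulPr !mxE od_lift.
  have := ltn_ord i; have := ltn_ord j => *.
  by rewrite !hGin ?ent_ee ?ent_eo ?key_id //; lia.
have e2 : Pm n *m B + D = Mf n.+1 (Gb n (fun=> 1)).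
  apply/matrixP=> i j; rewrite mxaddE [in RHS]mxE.
  case: (unliftP ord_max i) => [i' ->|->]; case: (unliftP ord_max j) => [j' ->|->].
  - rewrite mulPl_lift !mxE !od_lift !lift_max_val.
    have hi : (@nat_of_ord n i' < n)%N := ltn_ord i'; have hj : (@nat_of_ord n j' < n)%N := ltn_ord j'.
    rewrite Gb_in // !hGin; try lia.
    by rewrite ent_eo ent_oo addrC key_id.
  - rewrite mulPl_lift !mxE od_lift od_max lift_max_val /=.
    have hi : (@nat_of_ord n i' < n)%N := ltn_ord i'.
    rewrite Gb_col // !hGcol; try lia.
    by rewrite nn ent_ee ent_oe key_id.
  - rewrite mulPl_max !mxE od_lift od_max lift_max_val /=.
    have hj : (@nat_of_ord n j' < n)%N := ltn_ord j'.
    by rewrite Gb_row // hGrow ?add0r //; lia.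
  - by rewrite mulPl_max !mxE od_max /= Gb_corner hGcor addr0.
have e3 : Pm n *m A + C + (Pm n *m B + D) *m Pm n = 0.
  apply/matrixP=> i j; rewrite !mxaddE mulPr mxaddE [in RHS]mxE.
  have := ltn_ord j => jn.
  case: (unliftP ord_max i) => [i' ->|->].
  - rewrite !mulPl_lift !mxE !od_lift.
    have hi : (@nat_of_ord n i' < n)%N := ltn_ord i'.
    rewrite !hGin; try lia.
    rewrite ent_ee ent_eo ent_oe ent_oo.
    by rewrite [X in _ + X]addrC char2.
  - rewrite !mulPl_max !mxE !od_max od_lift !add0r !hGrow; try lia.
    by rewrite char2.
by rewrite e3 e1 e2 det_ublock.
Qed.

Local Open Scope ring_scope.

Lemma Xn_neq0 n : ('X^n : R) != 0.
Proof. by rewrite expf_neq0 // polyX_eq0. Qed.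

Lemma delta_X m : delta m = 'X^m.
Proof.
elim: m {-2}m (leqnn m) => [|N IH] m hm.
  by move: hm; rewrite leqn0 => /eqP ->; rewrite /delta det_mx00 expr0.
case: m hm => [|m] hm; first by rewrite /delta det_mx00 expr0.
case: m hm => [|m] hm.
  by rewrite /delta det_mx11 mxE /ent eqxx expr1.
have [n hn] : exists n, (m.+2 = n + n \/ m.+2 = (n + n).+1)%N.
  by exists (m.+2)./2; move: (odd_double_half m.+2); case: odd => /=; lia.
have n1 : (1 <= n)%N by lia.
have IHn : delta n = 'X^n by apply: IH; lia.
case: hn => e; rewrite e.
  by rewrite delta_even IHn -exprD.
have IHn1 : delta n.+1 = 'X^(n.+1) by apply: IH; lia.
have nzn : delta n != 0 by rewrite IHn Xn_neq0.
have D1 : Dm n (fun d => ent n d) = 0.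
  have := delta_succ nzn; rewrite IHn1 IHn exprS => /eqP.
  by move/eqP => h; apply: (addrI ('X * 'X^n)); rewrite addr0 -h.
have D2 : Dm n (fun _ => 1) = 0.
  have := key3 nzn; rewrite D1 mulr0 => /esym /eqP.
  by rewrite mulf_eq0 polyX_eq0 /= expf_eq0 /= => /eqP.
have D3 : Dm (n + n) (fun _ => 1) = 0 by rewrite Dm_even D2 mulr0.
have dnn : delta (n + n) = 'X^(n + n) by rewrite delta_even IHn -exprD.
have nznn : delta (n + n) != 0 by rewrite dnn Xn_neq0.
have D4 : Dm (n + n) (fun d => ent (n + n) d) = 0.
  have := key3 nznn; rewrite D3 expr2 mulr0 mulr0 => /eqP.
  by rewrite mulf_eq0 (negbTE nznn) /= => /eqP.
by rewrite delta_succ // D4 addr0 dnn exprS.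
Qed.

Local Open Scope ring_scope.

Definition Tm m (s : 'S_m) : R := \prod_(i : 'I_m) ent i (s i).

Lemma Tm_inv m (s : 'S_m) : Tm (s^-1)%g = Tm s.
Proof.
rewrite /Tm (reindex_inj (@perm_inj _ s)) /=.
by apply: eq_bigr => i _; rewrite permK ent_sym.
Qed.

Lemma inv_invg m (s : 'S_m) : involution (s^-1)%g = involution s.
Proof. by rewrite /involution -invMg invg_eq1. Qed.

Lemma det_inv m : \det (Mf m ent) = \sum_(s : 'S_m | involution s) Tm s.
Proof.
rewrite /determinant.
have m1 : (-1 : R) = 1 by rewrite oppR.
under eq_bigr => s _ do rewrite m1 expr1n mul1r.
rewrite (bigID (fun s : 'S_m => involution s)) /=.
have -> : \sum_(s : 'S_m | ~~ involution s) \prod_i Mf m ent i (s i) = 0.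
  pose r (s : 'S_m) : nat := enum_rank s.
  rewrite (bigID (fun s : 'S_m => (r s < r (s^-1)%g)%N)) /=.
  set x := (X in X + _).
  have -> : \sum_(s : 'S_m | ~~ involution s && ~~ (r s < r (s^-1)%g)%N)
              \prod_i Mf m ent i (s i) = x.
    rewrite (reindex_inj (@invg_inj _)) /= /x.
    apply: eq_big => [s|s _].
      rewrite invgK inv_invg.
      case: (boolP (involution s)) => //= ns.
      have ne : r s != r (s^-1)%g.
        apply/negP => /eqP /val_inj /enum_rank_inj es.
        by move: ns; rewrite /involution {2}es mulgV eqxx.
      by case: ltngtP ne => //.
    have e : forall t : 'S_m, \prod_i Mf m ent i (t i) = Tm t.
      by move=> t; apply: eq_bigr => i _; rewrite mxE.
    by rewrite !e Tm_inv.
  by rewrite char2.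
rewrite addr0; apply: eq_bigr => s _; apply: eq_bigr => i _; by rewrite mxE.
Qed.

Lemma entNE c d : c != d -> ent c d = (inJ (c + d))%:R.
Proof. by rewrite /ent => /negbTE ->. Qed.

Lemma Tm_val m (s : 'S_m) :
  Tm s = if transp_in inJ s then 'X^#|[pred i | s i == i]| else 0.
Proof.
rewrite /Tm (bigID (fun i => s i == i)) /=.
have -> : \prod_(i | s i == i) ent i (s i) = \prod_(i | s i == i) 'X.
  by apply: eq_bigr => i /eqP ->; rewrite /ent eqxx.
rewrite prodr_const.
case: (boolP (transp_in inJ s)) => t.
  rewrite big1 ?mulr1 // => i ni.
  move/forallP: t => /(_ i); rewrite ni /= => hJ.
  by rewrite entNE ?hJ //; rewrite eq_sym.
move/forallPn: t => [c]; rewrite negb_imply => /andP [nc nJ].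
rewrite (bigD1 c) //= entNE; last by rewrite eq_sym.
by rewrite (negbTE nJ) mul0r mulr0.
Qed.

Lemma inv_ss m (s : 'S_m) : involution s -> forall i, s (s i) = i.
Proof. by move/eqP=> h i; rewrite -permM h perm1. Qed.

Lemma sum_b_card (T : finType) (b : pred T) : (\sum_(i : T) (b i : nat))%N = #|[set i | b i]|.
Proof.
rewrite -sum1dep_card [RHS]big_mkcond /=; apply: eq_bigr => i _; by case: (b i).
Qed.

Lemma card_split m (s : 'S_m) : involution s ->
  (#|[pred i | s i == i]| + 2 * num_transp s = m)%N.
Proof.
move=> hs.
have e : forall i : 'I_m, ((s i == i) + ((i : nat) < s i) + (s i < (i : nat)) = 1)%N.
  move=> i; case: ltngtP => h /=.
  - by rewrite (_ : (s i == i) = false) //; apply/negbTE; rewrite neq_ltn h orbT.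
  - by rewrite (_ : (s i == i) = false) //; apply/negbTE; rewrite neq_ltn h.
  - by rewrite (_ : s i == i) //; apply/eqP/val_inj.
have hm : (\sum_(i : 'I_m) 1 = m)%N by rewrite sum1_card card_ord.
transitivity (\sum_(i : 'I_m) 1)%N; last exact: hm.
under [RHS]eq_bigr => i _ do rewrite -(e i).
rewrite !big_split /= !sum_b_card.
have -> : #|[set i : 'I_m | (s i < i)%N]| = #|[set c : 'I_m | (c < s c)%N]|.
  rewrite -(card_imset _ (@perm_inj _ s)); apply: eq_card => y.
  rewrite [RHS]inE; apply/imsetP/idP.
    by move=> [x]; rewrite inE => h ->; rewrite inv_ss.
  by move=> h; exists (s y); rewrite ?inE inv_ss.
rewrite /num_transp cardsE.
have -> : #|[set i | s i == i]| = #|[pred i | s i == i]| by apply: eq_card => i; rewrite inE.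
by rewrite -addnA addnn mul2n.
Qed.

Local Open Scope ring_scope.

Lemma sum_cond_card (V : pzSemiRingType) (T : finType) (P b : pred T) :
  \sum_(i | P i) (b i)%:R = (#|[set i | P i && b i]|)%:R :> V.
Proof.
rewrite -natr_sum -sum_b_card big_mkcond /=; congr (_%:R).
by apply: eq_bigr => i _; case: (P i).
Qed.

Lemma mu_coef m k : (2 * k <= m)%N ->
  (mu m k inJ)%:R = (('X^m : R)`_(m - 2 * k)).
Proof.
move=> hk.
have h := delta_X m.
rewrite /delta det_inv in h.
rewrite -h.
under eq_bigr => s _ do rewrite Tm_val.
rewrite -big_mkcondr coef_sum.
under eq_bigr => s _ do rewrite coefXn.
rewrite sum_cond_card /mu; congr (_%:R).
apply: eq_card => s; rewrite !inE.
case: (boolP (involution s)) => //= hs.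
have := card_split hs.
case: (transp_in inJ s); rewrite ?andbF ?andbT //= => e.
apply/eqP/eqP; lia.
Qed.

Local Close Scope ring_scope.

Theorem theorem2p1 (m k : nat) :
  1 <= m ->
  mu m k inJ %% 2 = (if k == 0 then 1 else 0).
Proof.
move=> m1.
case: (leqP (2 * k) m) => hk.
  have h := mu_coef hk.
  rewrite coefXn -(Fp_nat_mod (isT : prime 2)) in h.
  move: h.
  have hm2 : mu m k inJ %% 2 < 2 := ltn_pmod _ (isT : 0 < 2).
  have e : (m - 2 * k == m) = (k == 0) by apply/eqP/eqP; lia.
  rewrite e.
  move: (mu m k inJ %% 2) hm2 => [|[|r]] //= _; case: (k == 0) => //= /eqP //.
have -> : mu m k inJ = 0.
  apply/eqP; rewrite cards_eq0; apply/eqP/setP => s; rewrite !inE.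
  apply/negbTE/and3P => [[hs /eqP nt _]]; have := card_split hs; lia.
by rewrite (_ : (k == 0) = false) //; apply/negbTE; lia.
Qed.
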